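(* Let $(R,\mathfrak{m},k)$ be a Noetherian local ring and let $I,J$ be ideals of $R$ such that $J\mathfrak{m}\not\subseteq I\mathfrak{m}$. Then $I+J\mathfrak{m}$ is a Burch ideal. In particular, if $\dim R/I>0$ and $\dim R/J=0$, then $I+J\mathfrak{m}$ is a Burch ideal.
   Context: An ideal $L$ of a local ring $(R,\mathfrak{m})$ is called Burch if $L\mathfrak{m}:\mathfrak{m}\neq L:\mathfrak{m}$ (equivalently, $L\mathfrak{m}\neq (L:\mathfrak{m})\mathfrak{m}$). Here $A:B=\{r\in R: rB\subseteq A\}$. *)

(* Defs.v *)
From mathcomp Require Import all_boot all_algebra.
Set Implicit Arguments. Unset Strict Implicit. Unset Printing Implicit Defensive.
Import GRing.Theory.
Local Open Scope ring_scope.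

Section Ideals.
Variable R : comNzRingType.

Definition subsetR (A B : R -> Prop) : Prop := forall x, A x -> B x.
Definition eqsetR (A B : R -> Prop) : Prop := forall x, A x <-> B x.

Definition is_ideal (I : R -> Prop) : Prop :=
  [/\ I 0, (forall x y, I x -> I y -> I (x + y)) & (forall a x, I x -> I (a * x))].

Definition proper_ideal (I : R -> Prop) : Prop := is_ideal I /\ ~ I 1.

Definition maximal_ideal (M : R -> Prop) : Prop :=
  proper_ideal M /\
  (forall N, is_ideal N -> subsetR M N -> eqsetR N M \/ eqsetR N (fun _ => True)).

Definition prime_ideal (P : R -> Prop) : Prop :=
  proper_ideal P /\ (forall a b, P (a * b) -> P a \/ P b).

Definition local_ring_with (m : R -> Prop) : Prop :=
  maximal_ideal m /\ (forall M, maximal_ideal M -> eqsetR M m).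

Definition noetherian_ring : Prop :=
  forall I : nat -> R -> Prop,
    (forall n, is_ideal (I n)) -> (forall n, subsetR (I n) (I n.+1)) ->
    exists N, forall n, (N <= n)%N -> subsetR (I n) (I N).

Definition sum_ideal (I J : R -> Prop) : R -> Prop :=
  fun x => exists a b, [/\ I a, J b & x = a + b].

Inductive prod_ideal (I J : R -> Prop) : R -> Prop :=
  | prod_ideal_mul a b : I a -> J b -> prod_ideal I J (a * b)
  | prod_ideal_0 : prod_ideal I J 0
  | prod_ideal_add x y : prod_ideal I J x -> prod_ideal I J y -> prod_ideal I J (x + y).

Definition colon (A B : R -> Prop) : R -> Prop :=
  fun r => forall b, B b -> A (r * b).

Definition burch (m L : R -> Prop) : Prop :=
  ~ eqsetR (colon (prod_ideal L m) m) (colon L m).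

(* Krull dimension of R/I via chains of primes containing I:
   dim R/I >= n  iff there is a chain P_0 ⊊ P_1 ⊊ ... ⊊ P_n of primes containing I *)
Definition dim_quot_ge (I : R -> Prop) (n : nat) : Prop :=
  exists P : nat -> R -> Prop,
    (forall i, (i <= n)%N -> prime_ideal (P i) /\ subsetR I (P i)) /\
    (forall i, (i < n)%N -> subsetR (P i) (P i.+1) /\ ~ subsetR (P i.+1) (P i)).

Definition dim_quot_pos (I : R -> Prop) : Prop := dim_quot_ge I 1.
Definition dim_quot_zero (I : R -> Prop) : Prop := dim_quot_ge I 0 /\ ~ dim_quot_ge I 1.

End Ideals.

(* Main.v *)
From Stdlib Require Import ClassicalEpsilon Classical.
From mathcomp Require Import all_boot all_algebra.
From mathcomp Require Import ring.
Require Import Defs.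
Set Implicit Arguments. Unset Strict Implicit. Unset Printing Implicit Defensive.
Import GRing.Theory.
Local Open Scope ring_scope.

Section Proof.
Variable R : comNzRingType.
Implicit Types I J A : R -> Prop.

Lemma ideal0 I : is_ideal I -> I 0. Proof. by case. Qed.
Lemma idealD I x y : is_ideal I -> I x -> I y -> I (x+y).
Proof. by case=> _ h _; apply: h. Qed.
Lemma idealM I a x : is_ideal I -> I x -> I (a*x).
Proof. by case=> _ _ h; apply: h. Qed.
Lemma idealMr I a x : is_ideal I -> I x -> I (x*a).
Proof. by move=> hI hx; rewrite mulrC; apply: idealM. Qed.

Lemma prod_ideal_is I J : is_ideal I -> is_ideal (prod_ideal I J).
Proof.
move=> hI; split; first exact: prod_ideal_0.
- move=> x y; exact: prod_ideal_add.
- move=> a x; elim=> [u b Iu Jb| |x1 y1 _ h1 _ h2].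
  + by rewrite mulrA; apply: prod_ideal_mul => //; apply: idealM.
  + by rewrite mulr0; apply: prod_ideal_0.
  + by rewrite mulrDr; apply: prod_ideal_add.
Qed.

Lemma prod_ideal_sub I J A : is_ideal A -> (forall a b, I a -> J b -> A (a*b)) ->
  subsetR (prod_ideal I J) A.
Proof.
move=> hA h x; elim=> [u b Iu Jb| |x1 y1 _ h1 _ h2]; first exact: h.
- exact: ideal0.
- exact: idealD.
Qed.

Lemma sum_ideal_is I J : is_ideal I -> is_ideal J -> is_ideal (sum_ideal I J).
Proof.
move=> hI hJ; split.
- by exists 0, 0; split => //; [exact: ideal0 | exact: ideal0 | rewrite addr0].
- move=> x y [a [b [Ia Jb ->]]] [c [d [Ic Jd ->]]].
  exists (a+c), (b+d); split; [exact: idealD | exact: idealD | by rewrite addrACA].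
- move=> r x [a [b [Ia Jb ->]]]; exists (r*a), (r*b); split;
   [exact: idealM|exact: idealM| by rewrite mulrDr].
Qed.

Fixpoint spanl (l : seq R) : R -> Prop :=
  match l with
  | [::] => fun x => x = 0
  | a :: l' => fun x => exists r y, spanl l' y /\ x = r * a + y
  end.

Lemma spanl_ideal l : is_ideal (spanl l).
Proof.
elim: l => [|a l IH] /=.
- split => //; first by move=> x y -> ->; rewrite addr0.
  by move=> a x ->; rewrite mulr0.
- split.
  + exists 0, 0; split; [exact: ideal0 | by rewrite mul0r addr0].
  + move=> x y [r [u [hu ->]]] [s [v [hv ->]]]; exists (r+s), (u+v); split;
      first exact: idealD.
    by rewrite mulrDl addrACA.
  + move=> c x [r [u [hu ->]]]; exists (c*r), (c*u); split; first exact: idealM.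
    by rewrite mulrDr mulrA.
Qed.

Lemma spanl_cons_sub a l : subsetR (spanl l) (spanl (a :: l)).
Proof. by move=> x hx; exists 0, x; split => //; rewrite mul0r add0r. Qed.

Lemma spanl_mem l x : x \in l -> spanl l x.
Proof.
elim: l => [|a l IH]; first by rewrite in_nil.
rewrite in_cons; case/orP => [/eqP -> | h].
- exists 1, 0; split; [exact: (ideal0 (spanl_ideal l)) | by rewrite mul1r addr0].
- exact: (@spanl_cons_sub a l x (IH h)).
Qed.

Lemma spanl_sub l A : is_ideal A -> (forall x, x \in l -> A x) -> subsetR (spanl l) A.
Proof.
move=> hA; elim: l => [|a l IH] hl x /=; first by move=> ->; exact: ideal0.
move=> [r [y [hy ->]]]; apply: (idealD hA).
- by apply: (idealM _ hA); apply: hl; rewrite mem_head.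
- by apply: IH hy => z hz; apply: hl; rewrite in_cons hz orbT.
Qed.

Lemma prod_span_cons (m : R -> Prop) a l x : is_ideal m -> prod_ideal (spanl (a::l)) m x ->
  exists mu q, [/\ m mu, prod_ideal (spanl l) m q & x = mu*a + q].
Proof.
move=> hm; elim=> [u b Iu mb| |x1 y1 _ [mu1 [q1 [h1 h1' ->]]] _ [mu2 [q2 [h2 h2' ->]]]].
- case: Iu => [r [y [hy ->]]]; exists (r*b), (y*b); split.
  + exact: idealM.
  + exact: prod_ideal_mul.
  + ring.
- exists 0, 0; split; [exact: ideal0 | exact: prod_ideal_0 | ring].
- exists (mu1+mu2), (q1+q2); split; [exact: idealD | exact: prod_ideal_add | ring].
Qed.

Lemma nakayama (m A : R -> Prop) l : is_ideal m -> is_ideal A ->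
  (forall mu, m mu -> exists v, v*(1-mu) = 1) ->
  (forall x, x \in l -> sum_ideal A (prod_ideal (spanl l) m) x) -> forall x, x \in l -> A x.
Proof.
move=> hm hA hu; elim: l => [|a l IH] hl; first by move=> x; rewrite in_nil.
have [al [p [Aal hp Ea]]] := hl a (mem_head a l).
have [mu [q [mmu hq Ep]]] := prod_span_cons hm hp.
have [v hv] := hu mu mmu.
have e1 : a = al + (mu*a + q) by rewrite -Ep.
have e2 : (1-mu)*a = al+q.
  by rewrite mulrBl mul1r {1}e1; ring.
have e3 : a = v*al + v*q by rewrite -mulrDr -e2 mulrA hv mul1r.
have hpl := prod_ideal_is m (spanl_ideal l).
have IH' : forall x, x \in l -> A x.
  apply: IH => x hx.
  have hx' : x \in a :: l by rewrite in_cons hx orbT.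
  have [ax [px [Aax hpx ->]]] := hl x hx'.
  have [mu' [q' [_ hq' ->]]] := prod_span_cons hm hpx.
  rewrite {1}e3; exists (ax + mu' * (v*al)), (mu' * (v * q) + q'); split.
  + by apply: (idealD hA) => //; apply: (idealM _ hA); apply: (idealM _ hA).
  + by apply: (idealD hpl) => //; apply: (idealM _ hpl); apply: (idealM _ hpl).
  + ring.
have qA : A q.
  apply: (prod_ideal_sub hA) hq => u b hu' _; apply: idealMr => //.
  exact: (spanl_sub hA IH').
move=> x; rewrite in_cons; case/orP => [/eqP -> | hx]; last exact: IH'.
by rewrite e3; apply: (idealD hA); apply: (idealM _ hA).
Qed.

Definition mstep (X : R -> Prop) : R -> Prop :=
  match excluded_middle_informative
     (exists Y : R -> Prop, proper_ideal Y /\ subsetR X Y /\ ~ subsetR Y X) with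
  | left h => proj1_sig (constructive_indefinite_description _ h)
  | right _ => X end.

Lemma exists_maximal : noetherian_ring R -> forall Q : R -> Prop, proper_ideal Q ->
  exists M : R -> Prop, maximal_ideal M /\ subsetR Q M.
Proof.
move=> hN Q hQ.
pose C n := iter n mstep Q.
have CS n : C n.+1 = mstep (C n) by [].
have Cp n : proper_ideal (C n).
  elim: n => [//|n IH]; rewrite CS /mstep; case: excluded_middle_informative => h //.
  by have [? _] := proj2_sig (constructive_indefinite_description _ h).
have Cinc n : subsetR (C n) (C n.+1).
  rewrite CS /mstep; case: excluded_middle_informative => h //.
  by have [_ [? _]] := proj2_sig (constructive_indefinite_description _ h).
have [N0 hN0] := hN C (fun n => (Cp n).1) Cinc.
have hN0' := hN0 N0.+1 (leqnSn N0).
have hno : ~ exists Y : R -> Prop, proper_ideal Y /\ subsetR (C N0) Y /\ ~ subsetR Y (C N0).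
  move=> h; move: hN0'; rewrite CS /mstep; case: excluded_middle_informative => // h'.
  by case: (constructive_indefinite_description _ h') => Y [_ [_ hY]] /=.
have QC n : subsetR Q (C n).
  elim: n => [//|n IH] x hx; exact: Cinc (IH x hx).
exists (C N0); split; last exact: QC.
split; first exact: Cp.
move=> N' hN' sub; case: (classic (N' 1)) => h1.
- right => x; split => // _; rewrite -(mulr1 x); exact: idealM.
- left => x; split; last exact: sub.
  move=> hx; apply: NNPP => hnx; apply: hno; exists N'; split; first by split.
  split => // hs; exact: hnx (hs x hx).
Qed.

Definition gstep (N : R -> Prop) (l : seq R) : seq R :=
  match excluded_middle_informative (exists x, N x /\ ~ spanl l x) with
  | left h => proj1_sig (constructive_indefinite_description _ h) :: l
  | right _ => l end.

Lemma fin_gen : noetherian_ring R -> forall N : R -> Prop, is_ideal N -> exists l, eqsetR N (spanl l).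
Proof.
move=> hN N hNi.
pose C n := iter n (gstep N) [::].
have CS n : C n.+1 = gstep N (C n) by [].
have Cin n : forall x, x \in C n -> N x.
  elim: n => [|n IH] x; first by rewrite in_nil.
  rewrite CS /gstep; case: excluded_middle_informative => h; last exact: IH.
  case: (constructive_indefinite_description _ h) => y [hy _] /=.
  rewrite in_cons; case/orP => [/eqP -> // | ]; exact: IH.
have Cinc n : subsetR (spanl (C n)) (spanl (C n.+1)).
  rewrite CS /gstep; case: excluded_middle_informative => h //.
  exact: spanl_cons_sub.
have [N0 hN0] := hN (fun n => spanl (C n)) (fun n => spanl_ideal _) Cinc.
have hN0' := hN0 N0.+1 (leqnSn N0).
exists (C N0) => x; split; last exact: (spanl_sub hNi (Cin N0)).
move=> hx; apply: NNPP => hnx.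
have h : exists x, N x /\ ~ spanl (C N0) x by exists x.
move: hN0'; rewrite CS /gstep; case: excluded_middle_informative => // h'.
case: (constructive_indefinite_description _ h') => y [_ hy] /= sub.
apply: hy; apply: sub; exists 1, 0; split; first exact: (ideal0 (spanl_ideal _)).
by rewrite mul1r addr0.
Qed.

Lemma local_unit (m : R -> Prop) : noetherian_ring R -> local_ring_with m ->
  forall mu, m mu -> exists v, v*(1-mu) = 1.
Proof.
move=> hN hloc mu hmu; apply: NNPP => hn.
pose Q x := exists r, x = r*(1-mu).
have hQ : proper_ideal Q.
  split.
  - split; first by exists 0; rewrite mul0r.
    + by move=> x y [r ->] [s ->]; exists (r+s); rewrite mulrDl.
    + by move=> a x [r ->]; exists (a*r); rewrite mulrA.
  - by move=> [r hr]; apply: hn; exists r.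
have [M [hM QM]] := exists_maximal hN hQ.
have m1 : m (1 - mu) by apply/(hloc.2 M hM); apply: QM; exists 1; rewrite mul1r.
have [[hmi hm1] _] := hloc.1.
apply: hm1; have -> : (1 : R) = (1 - mu) + mu by rewrite subrK.
exact: idealD.
Qed.

Lemma part1 (m I J : R -> Prop) : noetherian_ring R -> local_ring_with m ->
  is_ideal I -> is_ideal J ->
  ~ subsetR (prod_ideal J m) (prod_ideal I m) ->
     burch m (sum_ideal I (prod_ideal J m)).
Proof.
move=> hN hloc hI hJ hnot heq.
have hm : is_ideal m by case: hloc => [[[]]].
set N := prod_ideal J m.
set L := sum_ideal I N.
have hNi : is_ideal N := prod_ideal_is m hJ.
have hLi : is_ideal L := sum_ideal_is hI hNi.
have hNL x : N x -> L x by move=> hx; exists 0, x; split => //; [exact: ideal0|rewrite add0r].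
have hJcol j : J j -> colon (prod_ideal L m) m j.
  move=> hj; apply/(heq j) => b hb; apply: hNL; exact: prod_ideal_mul.
have hNLm : subsetR N (prod_ideal L m).
  apply: prod_ideal_sub; first exact: prod_ideal_is.
  by move=> a b ha hb; apply: hJcol.
have hImi : is_ideal (prod_ideal I m) := prod_ideal_is m hI.
have hLm : subsetR (prod_ideal L m) (sum_ideal (prod_ideal I m) (prod_ideal N m)).
  apply: prod_ideal_sub; first by apply: sum_ideal_is => //; exact: prod_ideal_is.
  move=> u b [a [c [ha hc ->]]] hb; exists (a*b), (c*b); split.
  + exact: prod_ideal_mul.
  + exact: prod_ideal_mul.
  + by rewrite mulrDl.
have [l hl] := fin_gen hN hNi.
have hmono : subsetR (prod_ideal N m) (prod_ideal (spanl l) m).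
  apply: prod_ideal_sub; first exact: prod_ideal_is (spanl_ideal l).
  by move=> a b ha hb; apply: prod_ideal_mul => //; apply/hl.
have hA : forall x, x \in l -> prod_ideal I m x.
  apply: (nakayama hm hImi (local_unit hN hloc)) => x hx.
  have := hLm x (hNLm x ((hl x).2 (spanl_mem hx))).
  move=> [a [c [ha hc ->]]]; exists a, c; split => //; exact: hmono.
apply: hnot => x hx; apply: (spanl_sub hImi hA); exact/hl.
Qed.

End Proof.

Theorem proposition3p7 (R : comNzRingType) (m I J : R -> Prop) :
  noetherian_ring R -> local_ring_with m ->
  is_ideal I -> is_ideal J ->
  (~ subsetR (prod_ideal J m) (prod_ideal I m) ->
     burch m (sum_ideal I (prod_ideal J m))) /\
  (dim_quot_pos I -> dim_quot_zero J ->
     burch m (sum_ideal I (prod_ideal J m))).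
Proof.
move=> hN hloc hI hJ; split; first exact: part1.
move=> [P [h1 h2]] [_ hz]; apply: part1 => // hsub.
have [hp0 hI0] := h1 0%N isT.
have [hp1 hI1] := h1 1%N isT.
have [s01 ns10] := h2 0%N isT.
have JmP0 : forall x, prod_ideal J m x -> P 0%N x.
  move=> x hx; apply: hI0.
  apply: (prod_ideal_sub hI) (hsub x hx) => a b ha _; exact: idealMr.
case: (classic (subsetR J (P 0%N))) => hJP.
- apply: hz; exists P; split.
  + move=> [|[|i]] hi //; split => //.
    by move=> x hx; apply: s01; apply: hJP.
  + by move=> [|i] hi.
- have [j hj] := not_all_ex_not _ _ hJP.
  have [hjJ hjP] := imply_to_and _ _ hj.
  have mP0 : subsetR m (P 0%N).
    move=> mu hmu; case: (hp0.2 j mu) => //.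
    by apply: JmP0; apply: prod_ideal_mul.
  have [[hmp _] hmax] := hloc.1.
  case: (hmax (P 1%N) hp1.1.1 (fun x hx => s01 x (mP0 x hx))) => heq.
  + by apply: ns10 => x hx; apply: mP0; apply/heq.
  + by apply: hp1.1.2; apply/heq.
Qed.
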